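(* Let $G\in\mathfrak{Y}_n$. (1) Every proper subnormal subgroup of $G$ is abelian. (2) If $G$ is not perfect (i.e. $G'\neq G$), then $G$ is metabelian.
   Context: $\mathfrak{Y}_n$ denotes the class of all groups $G$ (finite or infinite) such that $N_G(A)=A$ for every non-abelian subgroup $A\le G$. A group is metabelian if its derived subgroup is abelian. *)

(* Defs.v *)
From Stdlib Require Import Arith.

Record group := Group {
  carrier :> Type;
  mul : carrier -> carrier -> carrier;
  inv : carrier -> carrier;
  one : carrier;
  mulA : forall x y z, mul x (mul y z) = mul (mul x y) z;
  mul1g : forall x, mul one x = x;
  mulVg : forall x, mul (inv x) x = one
}.

Section Defs.
Variable G : group.

Definition subset := G -> Prop.

Definition is_subgroup (H : subset) : Prop :=
  H (one G) /\
  (forall x y, H x -> H y -> H (mul G x y)) /\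
  (forall x, H x -> H (inv G x)).

Definition whole : subset := fun _ => True.

Definition conj (g x : G) : G := mul G (mul G g x) (inv G g).

Definition commutator (x y : G) : G :=
  mul G (mul G (inv G x) (inv G y)) (mul G x y).

Definition abelian_set (A : subset) : Prop :=
  forall x y, A x -> A y -> mul G x y = mul G y x.

Definition normalizer (A : subset) : subset :=
  fun g => forall x, A x <-> A (conj g x).

Definition normal_in (H K : subset) : Prop :=
  is_subgroup H /\ is_subgroup K /\ (forall x, H x -> K x) /\
  (forall k h, K k -> H h -> H (conj k h)).

Definition subnormal (H : subset) : Prop :=
  exists (n : nat) (C : nat -> subset),
    (forall x, C 0 x <-> H x) /\
    (forall x, C n x) /\
    (forall i, i < n -> normal_in (C i) (C (S i))).

Definition proper (H : subset) : Prop := exists g, ~ H g.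

Definition derived : subset :=
  fun x => forall S, is_subgroup S -> (forall a b, S (commutator a b)) -> S x.

Definition perfect : Prop := forall x, derived x.

Definition metabelian : Prop := abelian_set derived.

Definition in_Yn : Prop :=
  forall A, is_subgroup A -> ~ abelian_set A ->
    forall g, normalizer A g <-> A g.

End Defs.

(* Main.v *)
Require Import Defs.
From Stdlib Require Import Classical Arith Lia.

Section GL.
Variable G : group.
Lemma mulgV (x : G) : mul G x (inv G x) = one G.
Proof.
  rewrite <- (mul1g G (mul G x (inv G x))).
  rewrite <- (mulVg G (inv G x)) at 1.
  rewrite <- mulA. rewrite (mulA G (inv G x) x (inv G x)).
  rewrite mulVg, mul1g. apply mulVg.
Qed.
Lemma mulg1 (x : G) : mul G x (one G) = x.
Proof. rewrite <- (mulVg G x), mulA, mulgV. apply mul1g. Qed.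
Lemma invK (x : G) : inv G (inv G x) = x.
Proof.
  rewrite <- (mulg1 (inv G (inv G x))), <- (mulVg G x), mulA, mulVg. apply mul1g.
Qed.
Lemma mulgVK (z x : G) : mul G (mul G z (inv G x)) x = z.
Proof. rewrite <- mulA, mulVg. apply mulg1. Qed.
Lemma mulgKV (z x : G) : mul G (mul G z x) (inv G x) = z.
Proof. rewrite <- mulA, mulgV. apply mulg1. Qed.
Lemma conjK (k x : G) : conj G (inv G k) (conj G k x) = x.
Proof.
  unfold conj. rewrite invK, !mulA, mulVg, mul1g. apply mulgVK.
Qed.
Lemma conj_comm (k h : G) : conj G k h = mul G h (commutator G h (inv G k)).
Proof.
  unfold conj, commutator. rewrite invK, !mulA, mulgV, mul1g. reflexivity.
Qed.
End GL.

Lemma part1 (G : group) (HG : in_Yn G) (H : subset G) :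
  is_subgroup G H -> subnormal G H -> proper G H -> abelian_set G H.
Proof.
  intros HH [n [C [h0 [hn hch]]]] [g Hg].
  apply NNPP; intro Hna.
  assert (Key : forall i, i <= n -> forall x, C i x <-> H x).
  { induction i as [|i IH]; intros Hi x.
    - apply h0.
    - assert (Hl : i < n) by lia.
      destruct (hch i Hl) as [SCi [SCs [Incl Nrm]]].
      split.
      + intro Hx. apply (proj1 (HG H HH Hna x)). intro y. split.
        * intro Hy. apply (IH (Nat.lt_le_incl _ _ Hl)).
          apply Nrm; [exact Hx|]. apply (IH (Nat.lt_le_incl _ _ Hl)); exact Hy.
        * intro Hy. rewrite <- (conjK G x y).
          apply (IH (Nat.lt_le_incl _ _ Hl)). apply Nrm.
          -- destruct SCs as [_ [_ Si]]. apply Si; exact Hx.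
          -- apply (IH (Nat.lt_le_incl _ _ Hl)); exact Hy.
      + intro Hx. apply Incl. apply (IH (Nat.lt_le_incl _ _ Hl)); exact Hx. }
  apply Hg. apply (Key n (le_n n)). apply hn.
Qed.

Theorem proposition2p2 (G : group) (HG : in_Yn G) :
  (forall H : subset G, is_subgroup G H -> subnormal G H -> proper G H ->
     abelian_set G H) /\
  (~ perfect G -> metabelian G).
Proof.
  split.
  - intros H. apply part1; exact HG.
  - intro Hnp. unfold metabelian.
    assert (Sd : is_subgroup G (derived G)).
    { split; [|split].
      - intros S [S1 _] _. exact S1.
      - intros x y Hx Hy S HS Hc. pose proof HS as [_ [Sm _]].
        apply Sm; [apply Hx|apply Hy]; auto.
      - intros x Hx S HS Hc. pose proof HS as [_ [_ Si]].
        apply Si, Hx; auto. }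
    apply part1; [exact HG | exact Sd | |].
    + exists 1, (fun i => match i with 0 => derived G | _ => whole G end).
      split; [intro; tauto|]. split; [intro; exact I|].
      intros i Hi. assert (i = 0) by lia. subst i.
      split; [exact Sd|]. split.
      { split; [exact I|]. split; intros; exact I. }
      split; [intros; exact I|].
      intros k h _ Hh S HS Hc. rewrite conj_comm.
      pose proof HS as [_ [Sm _]]. apply Sm; [apply Hh; auto | apply Hc].
    + apply NNPP; intro Hp. apply Hnp. intro x.
      apply NNPP; intro Hx. apply Hp. exists x. exact Hx.
Qed.
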